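(* Let $d\geq1$ be an integer, $j\in\{0,\dots,d-1\}$, $\beta>0$, and let $\kappa,\Delta,\gamma,\delta>0$ satisfy $$\kappa^2=\frac{\gamma^2}{\lambda(\gamma,\delta)}=\tanh\beta,\qquad \Delta^2=\frac{\delta^2}{\lambda(\gamma,\delta)}\Big(1-\frac{\gamma^2\delta^2}{2\lambda(\gamma,\delta)}\Big)^{-2}=\sinh\beta\cosh\beta,\qquad \gamma^2=\delta^2=2\tanh\frac{\beta}{2},$$ where $\lambda(\gamma,\delta)=1+\frac{\gamma^2\delta^2}{4}$. Then $$\hat S\big(\ln\sqrt{1+\kappa^2\Delta^2}\big)|j^{(1)}_{\kappa,\Delta}\rangle=|j^{(2)}_{\gamma,\delta}\rangle=|j^{(3)}_\beta\rangle.$$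
   Context: Units $\hbar=1$. $\hat q,\hat p$ are the canonical position and momentum operators of a single bosonic mode, $[\hat q,\hat p]=i$; $|q\rangle_{\hat q}$ are generalized position eigenstates with ${}_{\hat q}\langle q|q'\rangle_{\hat q}=\delta(q-q')$. $\hat a=(\hat q+i\hat p)/\sqrt2$, $\hat n=\hat a^\dagger\hat a$, $|0\rangle_f$ is the vacuum with ${}_{\hat q}\langle q|0\rangle_f=\pi^{-1/4}e^{-q^2/2}$. $\hat X(r)=e^{-ir\hat p}$, $\hat Z(r)=e^{ir\hat q}$, $\hat V(\mathbf r)=e^{-ir_pr_q/2}\hat Z(r_p)\hat X(r_q)$ for $\mathbf r=(r_p,r_q)$. Squeezing operator $\hat S(\xi)=\exp(i\xi(\hat q\hat p+\hat p\hat q)/2)$ ($\xi\in\mathbb R$), which satisfies $\hat S^\dagger(\xi)\hat q\hat S(\xi)=e^{-\xi}\hat q$, $\hat S^\dagger(\xi)\hat p\hat S(\xi)=e^{\xi}\hat p$. With $\alpha_d=\sqrt{2\pi/d}$: ideal GKP state $|j^{(\mathrm{ideal})}\rangle=\sqrt{\alpha_d d}\sum_{s\in\mathbb Z}|\alpha_d(ds+j)\rangle_{\hat q}$ (non-normalizable). Approximate GKP states: $|j^{(1)}_{\kappa,\Delta}\rangle=(N^{(1)}_{\kappa,\Delta,j})^{-1/2}\sum_{s\in\mathbb Z}e^{-\frac12\kappa^2\alpha_d^2(ds+j)^2}\hat X(\alpha_d(ds+j))\hat S(-\ln\Delta)|0\rangle_f$ ($\kappa,\Delta>0$); $|j^{(2)}_{\gamma,\delta}\rangle=(N^{(2)}_{\gamma,\delta,j})^{-1/2}\iint\frac{dr_1dr_2}{2\pi\gamma\delta}e^{-\frac{r_1^2}{2\gamma^2}-\frac{r_2^2}{2\delta^2}}\hat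 V((r_1,r_2))|j^{(\mathrm{ideal})}\rangle$ ($0<\gamma\delta<2$); $|j^{(3)}_\beta\rangle=(N^{(3)}_{\beta,j})^{-1/2}e^{-\beta(\hat n+1/2)}|j^{(\mathrm{ideal})}\rangle$ ($\beta>0$); where each $N^{(\cdot)}>0$ is the constant making the state unit-norm. *)

(* Defs.v *)
From Stdlib Require Import Reals.
From Coquelicot Require Import Coquelicot.
Open Scope R_scope.

(* Wavefunctions in the position representation: psi(q) = <q|psi>. *)
Definition wf := R -> Complex.C.

Definition cis (t : R) : Complex.C := (cos t, sin t).
Definition Cabs2 (z : Complex.C) : R := (Re z)^2 + (Im z)^2.

Definition CSeries (a : nat -> Complex.C) : Complex.C :=
  (Series (fun n => Re (a n)), Series (fun n => Im (a n))).
Definition ZSeries_R (a : Z -> R) : R :=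
  Series (fun n => a (Z.of_nat n)) + Series (fun n => a (- Z.of_nat (S n))%Z).
Definition ZSeries (a : Z -> Complex.C) : Complex.C :=
  (ZSeries_R (fun s => Re (a s)), ZSeries_R (fun s => Im (a s))).

Definition RInt_R (f : R -> R) : R :=
  RInt_gen f (Rbar_locally m_infty) (Rbar_locally p_infty).
Definition CInt_R (f : R -> Complex.C) : Complex.C :=
  (RInt_R (fun x => Re (f x)), RInt_R (fun x => Im (f x))).

Definition norm2 (psi : wf) : R := RInt_R (fun x => Cabs2 (psi x)).
Definition normalize (psi : wf) : wf :=
  fun x => Cmult (RtoC (/ sqrt (norm2 psi))) (psi x).

(* X(r) = e^{-i r p}:  (X(r) psi)(q) = psi(q - r) *)
Definition Xop (r : R) (psi : wf) : wf := fun q => psi (q - r).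
(* S(xi) = exp(i xi (qp+pq)/2), with S^dag q S = e^{-xi} q:
   (S(xi) psi)(q) = e^{xi/2} psi(e^{xi} q) *)
Definition Sop (xi : R) (psi : wf) : wf :=
  fun q => Cmult (RtoC (exp (xi / 2))) (psi (exp xi * q)).
Definition vac : wf := fun q => RtoC (/ Rpower PI (1/4) * exp (- q ^ 2 / 2)).

Definition alpha (d : nat) : R := sqrt (2 * PI / INR d).
Definition qpt (d j : nat) (s : Z) : R := alpha d * (INR d * IZR s + INR j).

(* Ideal GKP state sqrt(alpha_d d) sum_s |q_s> is non-normalizable; an
   operator A defined on position eigenstates |y> (as the wavefunction
   A_y := A|y>) is applied to it by linearity:
   A|j^ideal> = sqrt(alpha_d d) sum_s A|q_s>. *)
Definition apply_ideal (d j : nat) (A : R -> wf) : wf :=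
  fun x => Cmult (RtoC (sqrt (alpha d * INR d))) (ZSeries (fun s => A (qpt d j s) x)).

Definition gkp1_un (d j : nat) (kappa Delta : R) : wf :=
  fun x => ZSeries (fun s =>
    Cmult (RtoC (exp (- / 2 * kappa ^ 2 * (qpt d j s) ^ 2)))
          (Xop (qpt d j s) (Sop (- ln Delta) vac) x)).
Definition gkp1 d j kappa Delta : wf := normalize (gkp1_un d j kappa Delta).

(* Gaussian average of displacements applied to a position eigenstate:
   (iint dr1 dr2 G(r1,r2) V((r1,r2)) |y>)(x), where
   V((rp,rq))|y> = e^{-i rp rq/2} e^{i rp (y+rq)} |y+rq>; the r2(=rq)
   integral against the delta function sets rq = x - y. *)
Definition Vavg (G : R -> R -> R) (y : R) : wf :=
  fun x => CInt_R (fun r1 =>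
    Cmult (RtoC (G r1 (x - y)))
          (Cmult (cis (- r1 * (x - y) / 2)) (cis (r1 * x)))).
Definition gauss2 (gamma delta : R) (r1 r2 : R) : R :=
  / (2 * PI * gamma * delta) * exp (- r1 ^ 2 / (2 * gamma ^ 2) - r2 ^ 2 / (2 * delta ^ 2)).
Definition gkp2 d j gamma delta : wf :=
  normalize (apply_ideal d j (Vavg (gauss2 gamma delta))).

(* Hermite functions <q|n>, n = a^dag a eigenbasis *)
Fixpoint hermite (n : nat) (x : R) : R :=
  match n with
  | O => 1
  | S m => match m with
           | O => 2 * x
           | S k => 2 * x * hermite m x - 2 * INR m * hermite k x
           end
  end.
Definition hermite_fn (n : nat) (x : R) : R :=
  / sqrt (2 ^ n * INR (Factorial.fact n) * sqrt PI) * hermite n x * exp (- x ^ 2 / 2).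
(* e^{-beta (n + 1/2)} |y>  =  sum_n e^{-beta(n+1/2)} <n|y> |n> *)
Definition expN (beta : R) (y : R) : wf :=
  fun x => RtoC (Series (fun n => exp (- beta * (INR n + / 2)) * hermite_fn n y * hermite_fn n x)).
Definition gkp3 d j beta : wf := normalize (apply_ideal d j (expN beta)).

Definition lam (gamma delta : R) : R := 1 + gamma ^ 2 * delta ^ 2 / 4.

(* Main.v *)
Require Import Defs.
From Stdlib Require Import Reals Lra Psatz Classical FunctionalExtensionality PropExtensionality.
From Coquelicot Require Import Coquelicot.
Open Scope R_scope.

Lemma iota_empty_R (P : R -> Prop) : (forall x, ~ P x) -> @iota R_CompleteSpace P = 0.
Proof.
  intros H.
  unfold iota, lim. simpl. unfold R_complete_lim.
  match goal with |- real (Lub_Rbar ?E) = 0 => assert (Hl : Lub_Rbar E = p_infty) end.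
  { apply is_lub_Rbar_unique. split.
    - intros x _; simpl; auto.
    - intros b Hb. destruct b as [b| |]; simpl; auto.
      + assert (Hx := Hb (b+1)). simpl in Hx. 
        assert (b + 1 <= b). { apply Hx. intros y Py. destruct (H y Py). } lra.
      + apply (Hb 0). intros y Py. destruct (H y Py). }
  rewrite Hl. reflexivity.
Qed.

Notation mI := (Rbar_locally m_infty).
Notation pI := (Rbar_locally p_infty).

Lemma RInt_R_transfer (f g : R -> R) (c : R) : c <> 0 ->
 (forall l, is_RInt_gen f mI pI l -> is_RInt_gen g mI pI (c*l)) ->
 (forall l, is_RInt_gen g mI pI l -> is_RInt_gen f mI pI (l/c)) ->
 RInt_R g = c * RInt_R f.
Proof.
  intros Hc H1 H2. unfold RInt_R.
  destruct (classic (exists l, is_RInt_gen f mI pI l)) as [[l Hl]|Hn].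
  - rewrite (is_RInt_gen_unique f l Hl). apply is_RInt_gen_unique. auto.
  - assert (E1 : RInt_gen f mI pI = 0).
    { apply iota_empty_R. intros l Hl. apply Hn. exists l. auto. }
    assert (E2 : RInt_gen g mI pI = 0).
    { apply iota_empty_R. intros l Hl. apply Hn. exists (l/c). auto. }
    rewrite E1, E2. ring.
Qed.

Lemma RInt_R_scal (f : R -> R) (k : R) : k <> 0 -> RInt_R (fun x => k * f x) = k * RInt_R f.
Proof.
  intros Hk. apply RInt_R_transfer; auto.
  - intros l Hl. exact (is_RInt_gen_scal f k l Hl).
  - intros l Hl.
    assert (H := is_RInt_gen_scal _ (/k) l Hl).
    eapply is_RInt_gen_ext; [| replace (l / k) with (scal (/k) l); [exact H|] ].
    + apply Filter_prod with (fun _ => True) (fun _ => True).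
      * exists 0. intros; exact I.
      * exists 0. intros; exact I.
      * intros x y _ _ z _. simpl. unfold scal; simpl; unfold mult; simpl. field. exact Hk.
    + unfold scal; simpl; unfold mult; simpl. unfold Rdiv. ring.
Qed.

Lemma is_RInt_gen_dilate (f : R -> R) (c l : R) : 0 < c ->
  is_RInt_gen f mI pI l -> is_RInt_gen (fun z => f (z / c)) mI pI (c * l).
Proof.
  intros Hc Hf P HP.
  assert (HP' : locally l (fun y => P (c * y))).
  { destruct HP as [eps Heps].
    assert (He : 0 < eps / c) by (apply Rdiv_lt_0_compat; [apply cond_pos|lra]).
    exists (mkposreal _ He). intros y Hy. apply Heps.
    unfold ball in *; simpl in *. unfold AbsRing_ball in *; simpl in *.
    unfold abs, minus, plus, opp in *; simpl in *.
    replace (c * y + - (c * l)) with (c * (y + - l)) by ring.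
    rewrite Rabs_mult, Rabs_pos_eq by lra.
    apply (Rmult_lt_compat_l c) in Hy; [|lra].
    replace (c * (eps / c)) with (pos eps) in Hy by (field; lra). lra. }
  specialize (Hf _ HP'). destruct Hf as [Qa Qb [Ma HQa] [Mb HQb] HQ].
  apply Filter_prod with (fun x => Qa (x / c)) (fun x => Qb (x / c)).
  - exists (c * Ma). intros x Hx. apply HQa.
    apply (Rmult_lt_reg_l c); [lra|]. replace (c * (x / c)) with x by (field; lra). lra.
  - exists (c * Mb). intros x Hx. apply HQb.
    apply (Rmult_lt_reg_l c); [lra|]. replace (c * (x / c)) with x by (field; lra). lra.
  - intros a b Ha Hb. destruct (HQ _ _ Ha Hb) as [y [Hy Py]].
    exists (c * y). split; auto. simpl in *.
    assert (H1 := is_RInt_comp_lin f (/c) 0 a b y).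
    replace (/ c * a + 0) with (a / c) in H1 by (unfold Rdiv; ring).
    replace (/ c * b + 0) with (b / c) in H1 by (unfold Rdiv; ring).
    specialize (H1 Hy).
    apply (is_RInt_scal _ _ _ c) in H1.
    eapply is_RInt_ext; [|exact H1].
    intros x _. unfold scal; simpl; unfold mult; simpl.
    replace (/ c * x + 0) with (x / c) by (unfold Rdiv; ring). field. lra.
Qed.

Lemma RInt_R_dilate (f : R -> R) (c : R) : 0 < c ->
  RInt_R (fun z => f (z / c)) = c * RInt_R f.
Proof.
  intros Hc. apply RInt_R_transfer; [lra| |].
  - intros l Hl. apply is_RInt_gen_dilate; auto.
  - intros l Hl. 
    assert (Hc' : 0 < / c) by (apply Rinv_0_lt_compat; lra).
    assert (H := is_RInt_gen_dilate _ (/c) l Hc' Hl).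
    eapply is_RInt_gen_ext; [| replace (l / c) with (/ c * l) by (unfold Rdiv; ring); exact H].
    apply Filter_prod with (fun _ => True) (fun _ => True).
    * exists 0. intros; exact I.
    * exists 0. intros; exact I.
    * intros x y _ _ z _. simpl. f_equal. field. lra.
Qed.

Lemma cont_of_deriv (f : R -> R) x : ex_derive f x -> continuous f x.
Proof. intros H. exact (@ex_derive_continuous R_AbsRing R_NormedModule f x H). Qed.

Lemma exp_decay_int (a u v : R) : 0 < a -> u <= v ->
  RInt (fun t => exp (- a * t)) u v = (exp (- a * u) - exp (- a * v)) / a.
Proof.
  intros Ha Huv.
  apply is_RInt_unique.
  assert (H := is_RInt_derive (fun t => - exp (- a * t) / a) (fun t => exp (- a * t)) u v).
  replace ((exp (- a * u) - exp (- a * v)) / a) with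
    (minus (- exp (- a * v) / a) (- exp (- a * u) / a)).
  2:{ unfold minus, plus, opp; simpl. field. lra. }
  apply H.
  - intros x _. auto_derive; auto. field. lra.
  - intros x _. apply cont_of_deriv. auto_derive. auto.
Qed.

Lemma exp_mono (x y : R) : x <= y -> exp x <= exp y.
Proof. intros H. destruct (Rle_lt_or_eq_dec _ _ H) as [H'|H']. apply Rlt_le, exp_increasing; auto. subst; lra. Qed.

Lemma ex_RInt_cont (f : R -> R) : (forall x, continuous f x) -> forall p q, ex_RInt f p q.
Proof. intros Hf p q. apply (@ex_RInt_continuous R_CompleteNormedModule). intros; apply Hf. Qed.

Lemma tail_bound (a : R) (h : R -> R) : 0 < a ->
  (forall x, continuous h x) -> (forall x, Rabs (h x) <= exp (- a * x ^ 2)) ->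
  forall u v, 1 <= u <= v -> Rabs (RInt h u v) <= exp (- a * u) / a.
Proof.
  intros Ha Hc Hb u v Huv.
  eapply Rle_trans. apply abs_RInt_le. lra. apply ex_RInt_cont; auto.
  eapply Rle_trans. apply (RInt_le _ (fun t => exp (- a * t))). lra.
  - apply ex_RInt_cont. intros x. apply (continuous_comp h Rabs). auto. apply continuous_Rabs.
  - apply ex_RInt_cont. intros x. apply cont_of_deriv. auto_derive. auto.
  - intros x Hx. eapply Rle_trans. apply Hb. apply exp_mono. assert (0 <= x * (x - 1)) by nra. assert (0 <= a * (x * (x - 1))) by (apply Rmult_le_pos; lra). nra.
  - rewrite exp_decay_int by lra.
    assert (0 < exp (- a * v)) by apply exp_pos.
    apply Rmult_le_compat_r. left; apply Rinv_0_lt_compat; lra. lra.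
Qed.

Lemma tail_lim (a : R) (h : R -> R) : 0 < a ->
  (forall x, continuous h x) -> (forall x, Rabs (h x) <= exp (- a * x ^ 2)) ->
  exists L, filterlim (fun M => RInt h 0 M) pI (locally L).
Proof.
  intros Ha Hc Hb.
  apply (filterlim_locally_cauchy (F := pI)).
  intros eps.
  set (M0 := Rmax 1 (/ (a * a * eps))).
  exists (fun M => M0 < M). split.
  - exists M0. auto.
  - assert (key : forall u v, M0 < u -> u <= v -> Rabs (RInt h 0 v - RInt h 0 u) < eps).
    { intros u v Hu Huv.
      assert (Hu1 : 1 <= u) by (unfold M0 in Hu; generalize (Rmax_l 1 (/ (a*a*eps))); lra).
      assert (E : RInt h 0 v - RInt h 0 u = RInt h u v).
      { rewrite <- (RInt_Chasles h 0 u v); try apply ex_RInt_cont; auto.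
        unfold plus; simpl. ring. }
      rewrite E. eapply Rle_lt_trans. apply tail_bound; auto. lra.
      assert (He := exp_ineq1_le (a * u)).
      assert (Hexp : exp (- a * u) = / exp (a * u)).
      { rewrite <- exp_Ropp. f_equal. ring. }
      rewrite Hexp.
      assert (Hpos := cond_pos eps).
      assert (Hu2 : / (a * a * eps) < u).
      { unfold M0 in Hu. generalize (Rmax_r 1 (/ (a*a*eps))). lra. }
      assert (Hq : 0 < a * a * eps) by (apply Rmult_lt_0_compat; [nra|lra]).
      apply (Rmult_lt_compat_l (a * a * eps)) in Hu2; [|lra].
      rewrite Rinv_r in Hu2 by lra.
      assert (0 < exp (a * u)) by apply exp_pos.
      apply (Rmult_lt_reg_r (exp (a*u) * a)). nra.
      field_simplify; try lra. nra. }
    intros u v Hu Hv. 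
    change (Rabs (RInt h 0 v - RInt h 0 u) < eps).
    destruct (Rle_dec u v) as [Huv|Huv].
    + apply key; auto.
    + rewrite Rabs_minus_sym. apply key; auto. lra.
Qed.

Lemma Phi_deriv (h : R -> R) : (forall x, continuous h x) ->
  forall x, is_derive (fun M => RInt h 0 M) x (h x).
Proof.
  intros Hc x. apply (is_derive_RInt h (fun M => RInt h 0 M) 0 x).
  - apply filter_forall. intros b. apply (RInt_correct (V := R_CompleteNormedModule)). apply ex_RInt_cont; auto.
  - apply Hc.
Qed.

Lemma gen_int (a : R) (h : R -> R) : 0 < a ->
  (forall x, continuous h x) -> (forall x, Rabs (h x) <= exp (- a * x ^ 2)) ->
  exists Lp Lm, filterlim (fun M => RInt h 0 M) pI (locally Lp) /\
    filterlim (fun M => RInt h 0 M) mI (locally Lm) /\ is_RInt_gen h mI pI (Lp - Lm).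
Proof.
  intros Ha Hc Hb.
  destruct (tail_lim a h Ha Hc Hb) as [Lp HLp].
  assert (Hc' : forall x, continuous (fun y => h (- y)) x).
  { intros x. apply (continuous_comp Ropp h). apply cont_of_deriv. auto_derive. auto. apply Hc. }
  assert (Hb' : forall x, Rabs (h (- x)) <= exp (- a * x ^ 2)).
  { intros x. replace (x ^ 2) with ((- x) ^ 2) by ring. apply Hb. }
  destruct (tail_lim a _ Ha Hc' Hb') as [L' HL'].
  assert (HLm : filterlim (fun M => RInt h 0 M) mI (locally (- L'))).
  { apply (filterlim_ext (fun M => opp (RInt (fun y => h (- y)) 0 (- M)))).
    - intros M. 
      assert (H1 := is_RInt_comp_opp h 0 (- M) (RInt h 0 M)).
      replace (- 0) with 0 in H1 by ring. replace (- - M) with M in H1 by ring.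
      specialize (H1 (RInt_correct (V := R_CompleteNormedModule) _ _ _ (ex_RInt_cont h Hc 0 M))).
      apply (is_RInt_unique (V := R_CompleteNormedModule)) in H1. rewrite <- H1.
      symmetry. apply (is_RInt_unique (V:=R_CompleteNormedModule)).
      apply (is_RInt_opp (V:=R_CompleteNormedModule) (fun y => h (- y))).
      apply (RInt_correct (V := R_CompleteNormedModule)). apply ex_RInt_cont; auto.
    - apply (filterlim_comp _ _ _ (fun M => RInt (fun y => h (- y)) 0 (- M)) opp _ (locally L')).
      + apply (filterlim_comp _ _ _ Ropp (fun M => RInt (fun y => h (- y)) 0 M) _ pI).
        * apply (filterlim_Rbar_opp m_infty).
        * exact HL'.
      + exact (@filterlim_opp R_AbsRing R_NormedModule L'). }
  exists Lp, (- L'). split; [exact HLp|]. split; [exact HLm|].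
  apply (is_RInt_gen_ext (Derive (fun M => RInt h 0 M))).
  - apply filter_forall. intros [p q] x _. apply is_derive_unique, Phi_deriv; auto.
  - apply is_RInt_gen_Derive; auto.
    + apply filter_forall. intros [p q] x _. eexists. apply Phi_deriv; auto.
    + apply filter_forall. intros [p q] x _.
      apply (continuous_ext h). intros y. symmetry. apply is_derive_unique, Phi_deriv; auto.
      apply Hc.
Qed.

Definition gc (a k r : R) := exp (- a * r ^ 2) * cos (k * r).
Definition gs (a k r : R) := exp (- a * r ^ 2) * sin (k * r).

Lemma gc_cont a k x : continuous (gc a k) x.
Proof. apply cont_of_deriv. unfold gc. auto_derive. auto. Qed.
Lemma gs_cont a k x : continuous (gs a k) x.
Proof. apply cont_of_deriv. unfold gs. auto_derive. auto. Qed.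

Lemma gc_bound a k x : Rabs (gc a k x) <= exp (- a * x ^ 2).
Proof.
  unfold gc. rewrite Rabs_mult, (Rabs_pos_eq (exp _)) by (left; apply exp_pos).
  assert (H := COS_bound (k * x)). assert (0 < exp (- a * x ^ 2)) by apply exp_pos.
  assert (Rabs (cos (k * x)) <= 1) by (apply Rabs_le; lra). nra.
Qed.
Lemma gs_bound a k x : Rabs (gs a k x) <= exp (- a * x ^ 2).
Proof.
  unfold gs. rewrite Rabs_mult, (Rabs_pos_eq (exp _)) by (left; apply exp_pos).
  assert (H := SIN_bound (k * x)). assert (0 < exp (- a * x ^ 2)) by apply exp_pos.
  assert (Rabs (sin (k * x)) <= 1) by (apply Rabs_le; lra). nra.
Qed.

Lemma byparts (a k M : R) : 0 < a ->
  RInt (fun t => - (t * exp (- a * t ^ 2) * sin (k * t))) 0 M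
  = exp (- a * M ^ 2) * sin (k * M) / (2 * a) - k / (2 * a) * RInt (gc a k) 0 M.
Proof.
  intros Ha.
  apply (is_RInt_unique (V := R_CompleteNormedModule)).
  set (U := fun t => exp (- a * t ^ 2) * sin (k * t) / (2 * a)).
  set (U' := fun t => - (t * exp (- a * t ^ 2) * sin (k * t)) + k / (2 * a) * gc a k t).
  assert (H1 : is_RInt U' 0 M (minus (U M) (U 0))).
  { apply (is_RInt_derive (V := R_CompleteNormedModule)).
    - intros x _. unfold U, U', gc. auto_derive; auto. replace (x * (x * 1)) with (x ^ 2) by ring. field. lra.
    - intros x _. apply cont_of_deriv. unfold U', gc. auto_derive. auto. }
  assert (H2 := is_RInt_scal (V := R_CompleteNormedModule) (gc a k) 0 M (k / (2 * a)) _
                  (RInt_correct (V := R_CompleteNormedModule) _ _ _ (ex_RInt_cont _ (gc_cont a k) 0 M))).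
  assert (H3 := is_RInt_minus (V := R_CompleteNormedModule) _ _ _ _ _ _ H1 H2).
  eapply is_RInt_ext; [|
    replace (exp (- a * M ^ 2) * sin (k * M) / (2 * a) - k / (2 * a) * RInt (gc a k) 0 M)
     with (minus (minus (U M) (U 0)) (scal (k / (2 * a)) (RInt (gc a k) 0 M))); [exact H3|] ].
  - intros x _. unfold U', minus, plus, opp, scal; simpl. unfold mult; simpl. ring.
  - unfold U, minus, plus, opp, scal; simpl. unfold mult; simpl.
    replace (k * 0) with 0 by ring. rewrite sin_0. field. lra.
Qed.

Lemma Dgc (a u v : R) : Derive (fun z => gc a z v) u = - (v * exp (- a * v ^ 2) * sin (u * v)).
Proof. apply is_derive_unique. unfold gc. auto_derive; auto. replace (v * (v * 1)) with (v ^ 2) by ring. ring. Qed.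

Lemma cont_exp_pt x : continuity_pt exp x.
Proof. apply derivable_continuous_pt, derivable_pt_exp. Qed.

Lemma Dgc_cont (a x y : R) : continuity_2d_pt (fun u v => Derive (fun z => gc a z v) u) x y.
Proof.
  apply (continuity_2d_pt_ext (fun u v => - ((v * exp (- a * (v * v))) * sin (u * v)))).
  { intros u v. rewrite Dgc. replace (v ^ 2) with (v * v) by ring. reflexivity. }
  apply continuity_2d_pt_opp. apply continuity_2d_pt_mult.
  - apply continuity_2d_pt_mult. apply continuity_2d_pt_id2.
    apply (continuity_1d_2d_pt_comp exp (fun u v => - a * (v * v))).
    + apply cont_exp_pt.
    + apply continuity_2d_pt_mult. apply continuity_2d_pt_const.
      apply continuity_2d_pt_mult; apply continuity_2d_pt_id2.
  - apply (continuity_1d_2d_pt_comp sin (fun u v => u * v)).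
    + apply continuity_sin.
    + apply continuity_2d_pt_mult. apply continuity_2d_pt_id1. apply continuity_2d_pt_id2.
Qed.

Lemma Phic_deriv (a M k : R) : 0 < a ->
  is_derive (fun k => RInt (gc a k) 0 M) k
    (exp (- a * M ^ 2) * sin (k * M) / (2 * a) - k / (2 * a) * RInt (gc a k) 0 M).
Proof.
  intros Ha.
  rewrite <- byparts by exact Ha.
  assert (E : RInt (fun t => - (t * exp (- a * t ^ 2) * sin (k * t))) 0 M
            = RInt (fun t => Derive (fun u => gc a u t) k) 0 M).
  { apply RInt_ext. intros x _. rewrite Dgc. reflexivity. }
  rewrite E.
  apply (is_derive_RInt_param (fun u t => gc a u t) 0 M k).
  - apply filter_forall. intros x0 t _. unfold gc. auto_derive. auto.
  - intros t _. apply Dgc_cont.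
  - apply filter_forall. intros y. apply ex_RInt_cont. apply gc_cont.
Qed.

Ltac fix_pow := repeat match goal with |- context[?x * (?x * 1)] => replace (x * (x * 1)) with (x ^ 2) by ring end.

Lemma is_derive_eq (f : R -> R) x l l' : is_derive f x l -> l = l' -> is_derive f x l'.
Proof. intros H E; subst; exact H. Qed.

Lemma Theta_deriv (a M t : R) : 0 < a ->
  is_derive (fun k => RInt (gc a k) 0 M * exp (k ^ 2 / (4 * a))) t
    (exp (t ^ 2 / (4 * a)) * (exp (- a * M ^ 2) * sin (t * M) / (2 * a))).
Proof.
  intros Ha.
  assert (H := Phic_deriv a M t Ha).
  assert (He : is_derive (fun k => exp (k ^ 2 / (4 * a))) t (2 * t / (4 * a) * exp (t ^ 2 / (4 * a)))).
  { auto_derive. auto. fix_pow. unfold Rdiv. field. lra. }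
  assert (Hp := is_derive_mult (K:=R_AbsRing) _ _ _ _ _ H He (fun n m => Rmult_comm n m)).
  eapply is_derive_eq. exact Hp.
  unfold plus, mult; simpl. unfold Rdiv. field. lra.
Qed.

Lemma Theta_bound (a M k : R) : 0 < a ->
  Rabs (RInt (gc a k) 0 M * exp (k ^ 2 / (4 * a)) - RInt (gc a 0) 0 M)
    <= Rabs k * (exp (k ^ 2 / (4 * a)) * exp (- a * M ^ 2) / (2 * a)).
Proof.
  intros Ha.
  destruct (MVT_gen (fun k => RInt (gc a k) 0 M * exp (k ^ 2 / (4 * a))) 0 k
     (fun t => exp (t ^ 2 / (4 * a)) * (exp (- a * M ^ 2) * sin (t * M) / (2 * a)))) as [c [Hc E]].
  - intros x _. apply Theta_deriv; auto.
  - intros x _. apply (proj2 (continuity_pt_filterlim _ _)). apply (cont_of_deriv (fun k => RInt (gc a k) 0 M * exp (k ^ 2 / (4 * a)))). eexists. apply Theta_deriv; auto.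
  - cbv beta in E.
    replace (0 ^ 2 / (4 * a)) with 0 in E by (unfold Rdiv; ring). rewrite exp_0, Rmult_1_r in E.
    rewrite E. rewrite Rminus_0_r, Rabs_mult. rewrite (Rmult_comm (Rabs k)). apply Rmult_le_compat_r. apply Rabs_pos.
    assert (Hc2 : c ^ 2 <= k ^ 2).
    { unfold Rmin, Rmax in Hc. destruct (Rle_dec 0 k); nra. }
    assert (Hq : exp (c ^ 2 / (4 * a)) <= exp (k ^ 2 / (4 * a))).
    { apply exp_mono. unfold Rdiv. apply Rmult_le_compat_r. left; apply Rinv_0_lt_compat; lra. auto. }
    assert (Hs := SIN_bound (c * M)).
    assert (0 < exp (- a * M ^ 2)) by apply exp_pos.
    assert (0 < exp (c ^ 2 / (4 * a))) by apply exp_pos.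
    rewrite Rabs_mult, (Rabs_pos_eq (exp _)) by lra.
    unfold Rdiv. rewrite Rabs_mult, Rabs_mult, (Rabs_pos_eq (exp (- a * M ^ 2))) by lra.
    rewrite (Rabs_pos_eq (/ (2 * a))) by (left; apply Rinv_0_lt_compat; lra).
    assert (0 < / (2 * a)) by (apply Rinv_0_lt_compat; lra).
    assert (Rabs (sin (c * M)) <= 1) by (apply Rabs_le; lra).
    assert (0 <= Rabs (sin (c * M))) by apply Rabs_pos.
    assert (exp (- a * M ^ 2) * Rabs (sin (c * M)) * / (2 * a) <= exp (- a * M ^ 2) * / (2 * a)).
    { apply Rmult_le_compat_r; [lra|]. nra. }
    assert (0 <= exp (- a * M ^ 2) * Rabs (sin (c * M)) * / (2 * a)).
    { apply Rmult_le_pos; [|lra]. apply Rmult_le_pos; lra. }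
    replace (exp (k ^ 2 * / (4 * a)) * exp (- a * M ^ 2) * / (2 * a)) with
       (exp (k ^ 2 * / (4 * a)) * (exp (- a * M ^ 2) * / (2 * a))) by ring.
    unfold Rdiv in Hq.
    apply Rmult_le_compat; lra.
Qed.

Lemma small_gauss (a C : R) : 0 < a -> 0 <= C -> forall eps, 0 < eps ->
  exists N, forall M, N < Rabs M -> C * exp (- a * M ^ 2) < eps.
Proof.
  intros Ha HC eps He.
  exists (C / (a * eps) + 1). intros M HM.
  assert (HM1 : 1 <= Rabs M).
  { assert (0 <= C / (a * eps)) by (apply Rmult_le_pos; [lra| left; apply Rinv_0_lt_compat; nra]). lra. }
  assert (HM2 : Rabs M <= M ^ 2).
  { assert (M ^ 2 = Rabs M * Rabs M) by (rewrite <- Rabs_mult; rewrite Rabs_pos_eq; [ring| nra]). nra. }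
  assert (Hexp : exp (- a * M ^ 2) = / exp (a * M ^ 2)).
  { rewrite <- exp_Ropp. f_equal. ring. }
  rewrite Hexp.
  assert (H1 := exp_ineq1_le (a * M ^ 2)).
  assert (0 < exp (a * M ^ 2)) by apply exp_pos.
  assert (Hq : C / (a * eps) < M ^ 2) by lra.
  apply (Rmult_lt_compat_l (a * eps)) in Hq; [|nra].
  replace (a * eps * (C / (a * eps))) with C in Hq by (field; lra).
  apply (Rmult_lt_reg_r (exp (a * M ^ 2))). lra.
  rewrite Rmult_assoc, Rinv_l by lra. nra.
Qed.

Lemma lim_rel (a k Lk L0 : R) (s : Rbar) : 0 < a -> (s = p_infty \/ s = m_infty) ->
  is_lim (fun M => RInt (gc a k) 0 M) s Lk -> is_lim (fun M => RInt (gc a 0) 0 M) s L0 ->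
  Lk * exp (k ^ 2 / (4 * a)) = L0.
Proof.
  intros Ha Hs Hk H0.
  set (D := fun M => RInt (gc a k) 0 M * exp (k ^ 2 / (4 * a)) - RInt (gc a 0) 0 M).
  assert (H1 : is_lim D s (Lk * exp (k ^ 2 / (4 * a)) - L0)).
  { apply is_lim_minus'; auto. apply (is_lim_scal_r _ _ _ Lk). auto. }
  assert (H2 : is_lim D s 0).
  { set (C := Rabs k * exp (k ^ 2 / (4 * a)) / (2 * a)).
    assert (HC : 0 <= C).
    { unfold C. apply Rmult_le_pos. apply Rmult_le_pos. apply Rabs_pos. left; apply exp_pos.
      left; apply Rinv_0_lt_compat; lra. }
    intros P [eps HP].
    destruct (small_gauss a C Ha HC eps (cond_pos eps)) as [N HN].
    assert (Hb : forall M, N < Rabs M -> P (D M)).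
    { intros M HM. apply HP. change (Rabs (D M - 0) < eps). rewrite Rminus_0_r.
      eapply Rle_lt_trans. apply Theta_bound; auto.
      replace (Rabs k * (exp (k ^ 2 / (4 * a)) * exp (- a * M ^ 2) / (2 * a))) with
        (C * exp (- a * M ^ 2)) by (unfold C; field; lra). apply HN; auto. }
    destruct Hs as [-> | ->].
    - exists (Rabs N). intros x Hx. apply Hb. assert (N <= Rabs N) by apply Rle_abs.
      rewrite Rabs_pos_eq; [lra|]. assert (0 <= Rabs N) by apply Rabs_pos. lra.
    - exists (- Rabs N). intros x Hx. apply Hb. assert (N <= Rabs N) by apply Rle_abs.
      rewrite Rabs_left; [lra|]. assert (0 <= Rabs N) by apply Rabs_pos. lra. }
  apply is_lim_unique in H1. apply is_lim_unique in H2. rewrite H1 in H2.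
  apply Rbar_finite_eq in H2. apply Rminus_diag_uniq; exact H2.
Qed.

Lemma gc0_pos a x : gc a 0 x = exp (- a * x ^ 2).
Proof. unfold gc. rewrite Rmult_0_l, cos_0. ring. Qed.

Lemma int01_pos (a : R) : 0 < a -> exp (- a) <= RInt (gc a 0) 0 1 /\ exp (- a) <= RInt (gc a 0) (-1) 0.
Proof.
  intros Ha. split.
  - replace (exp (- a)) with (RInt (fun _ => exp (- a)) 0 1).
    2:{ rewrite RInt_const. unfold scal; simpl; unfold mult; simpl. ring. }
    apply RInt_le. lra. apply ex_RInt_const. apply ex_RInt_cont, gc_cont.
    intros x Hx. rewrite gc0_pos. apply exp_mono. assert (x ^ 2 <= 1) by nra. assert (a * x ^ 2 <= a * 1) by (apply Rmult_le_compat_l; lra). lra.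
  - replace (exp (- a)) with (RInt (fun _ => exp (- a)) (-1) 0).
    2:{ rewrite RInt_const. unfold scal; simpl; unfold mult; simpl. ring. }
    apply RInt_le. lra. apply ex_RInt_const. apply ex_RInt_cont, gc_cont.
    intros x Hx. rewrite gc0_pos. apply exp_mono. assert (x ^ 2 <= 1) by nra. assert (a * x ^ 2 <= a * 1) by (apply Rmult_le_compat_l; lra). lra.
Qed.

Lemma gauss_main (a : R) : 0 < a ->
  exists J0, 0 < J0 /\ forall k, is_RInt_gen (gc a k) mI pI (J0 * exp (- k ^ 2 / (4 * a))).
Proof.
  intros Ha.
  destruct (gen_int a (gc a 0) Ha (gc_cont a 0) (gc_bound a 0)) as [P0 [M0 [HP0 [HM0 HI0]]]].
  exists (P0 - M0). split.
  - destruct (int01_pos a Ha) as [I1 I2].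
    assert (0 < exp (- a)) by apply exp_pos.
    assert (HP : Rbar_le (RInt (gc a 0) 0 1) P0).
    { apply (filterlim_le (F := pI) (fun _ => RInt (gc a 0) 0 1) (fun M => RInt (gc a 0) 0 M)).
      - exists 1. intros x Hx.
        rewrite <- (RInt_Chasles (V := R_CompleteNormedModule) (gc a 0) 0 1 x) by (apply ex_RInt_cont, gc_cont).
        unfold plus; simpl.
        assert (0 <= RInt (gc a 0) 1 x).
        { apply RInt_ge_0. lra. apply ex_RInt_cont, gc_cont. intros y _. rewrite gc0_pos. left; apply exp_pos. }
        lra.
      - apply filterlim_const.
      - exact HP0. }
    assert (HM : Rbar_le M0 (RInt (gc a 0) 0 (-1))).
    { apply (filterlim_le (F := mI) (fun M => RInt (gc a 0) 0 M) (fun _ => RInt (gc a 0) 0 (-1))).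
      - exists (-1). intros x Hx.
        rewrite <- (RInt_Chasles (V := R_CompleteNormedModule) (gc a 0) 0 x (-1)) by (apply ex_RInt_cont, gc_cont).
        unfold plus; simpl.
        assert (0 <= RInt (gc a 0) x (-1)).
        { apply RInt_ge_0. lra. apply ex_RInt_cont, gc_cont. intros y _. rewrite gc0_pos. left; apply exp_pos. }
        lra.
      - exact HM0.
      - apply filterlim_const. }
    simpl in HP, HM.
    assert (E : RInt (gc a 0) 0 (-1) = - RInt (gc a 0) (-1) 0).
    { rewrite <- (opp_RInt_swap (V := R_CompleteNormedModule)). reflexivity. apply ex_RInt_cont, gc_cont. }
    lra.
  - intros k.
    destruct (gen_int a (gc a k) Ha (gc_cont a k) (gc_bound a k)) as [Pk [Mk [HPk [HMk HIk]]]].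
    assert (E1 : Pk * exp (k ^ 2 / (4 * a)) = P0).
    { apply (lim_rel a k Pk P0 p_infty Ha (or_introl eq_refl)); assumption. }
    assert (E2 : Mk * exp (k ^ 2 / (4 * a)) = M0).
    { apply (lim_rel a k Mk M0 m_infty Ha (or_intror eq_refl)); assumption. }
    replace ((P0 - M0) * exp (- k ^ 2 / (4 * a))) with (Pk - Mk). exact HIk.
    rewrite <- E1, <- E2.
    replace (- k ^ 2 / (4 * a)) with (- (k ^ 2 / (4 * a))) by (unfold Rdiv; ring).
    rewrite exp_Ropp. field. apply Rgt_not_eq, exp_pos.
Qed.

Lemma gauss_sin (a k : R) : 0 < a -> is_RInt_gen (gs a k) mI pI 0.
Proof.
  intros Ha.
  destruct (gen_int a (gs a k) Ha (gs_cont a k) (gs_bound a k)) as [P [M [HP [HM HI]]]].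
  assert (Hev : forall x, RInt (gs a k) 0 (- x) = RInt (gs a k) 0 x).
  { intros x.
    assert (H1 := is_RInt_comp_opp (gs a k) 0 x (RInt (gs a k) 0 (- x))).
    replace (- 0) with 0 in H1 by ring.
    specialize (H1 (RInt_correct (V := R_CompleteNormedModule) _ _ _ (ex_RInt_cont _ (gs_cont a k) 0 (- x)))).
    apply (is_RInt_unique (V := R_CompleteNormedModule)) in H1. rewrite <- H1.
    apply RInt_ext. intros y _. unfold gs, opp; simpl.
    replace (k * - y) with (- (k * y)) by ring. rewrite sin_neg.
    replace (- y * (- y * 1)) with (y * (y * 1)) by ring. ring. }
  assert (HM' : filterlim (fun x => RInt (gs a k) 0 x) mI (locally P)).
  { apply (filterlim_ext (fun x => RInt (gs a k) 0 (- x))). exact Hev.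
    apply (filterlim_comp _ _ _ Ropp (fun x => RInt (gs a k) 0 x) _ pI).
    apply (filterlim_Rbar_opp m_infty). exact HP. }
  assert (E : M = P) by (apply (filterlim_locally_unique (F := mI) _ _ _ HM HM')).
  replace 0 with (P - M) by lra. exact HI.
Qed.

Lemma herm_rec (k : nat) (x : R) :
  hermite (S (S k)) x = 2 * x * hermite (S k) x - 2 * INR (S k) * hermite k x.
Proof. reflexivity. Qed.

Definition fct (n : nat) : R := INR (Factorial.fact n).

Lemma fct_S n : fct (S n) = INR (S n) * fct n.
Proof. unfold fct. rewrite fact_simpl, mult_INR. reflexivity. Qed.

Lemma fct_pos n : 0 < fct n.
Proof. unfold fct. apply lt_0_INR. apply Factorial.lt_O_fact. Qed.

Definition bco (x y : R) (n : nat) : R := hermite n x * hermite n y / (2 ^ n * fct n).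

Lemma bco_rec (x y : R) (m : nat) :
  INR (m + 4) * bco x y (m + 4) =
  2 * x * y * bco x y (m + 3) + (2 * INR m + 5 - 2 * (x ^ 2 + y ^ 2)) * bco x y (m + 2)
  + 2 * x * y * bco x y (m + 1) - INR (m + 1) * bco x y m.
Proof.
  unfold bco.
  replace (m + 4)%nat with (S (S (S (S m)))) by lia.
  replace (m + 3)%nat with (S (S (S m))) by lia.
  replace (m + 2)%nat with (S (S m)) by lia.
  replace (m + 1)%nat with (S m) by lia.
  rewrite !herm_rec. rewrite !fct_S. rewrite !S_INR.
  assert (H1 := fct_pos m).
  assert (H2 : 0 < 2 ^ m) by (apply pow_lt; lra).
  simpl pow.
  assert (H3 := pos_INR m). field. repeat split; lra.
Qed.

Definition eh (x : R) (n : nat) : R := hermite n x ^ 2 / (2 ^ n * fct n).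

Lemma eh_nonneg x n : 0 <= eh x n.
Proof.
  unfold eh. apply Rmult_le_pos. apply pow2_ge_0.
  left. apply Rinv_0_lt_compat. apply Rmult_lt_0_compat. apply pow_lt; lra. apply fct_pos.
Qed.

Lemma eh_step (x eps : R) (n : nat) : 0 < eps ->
  eh x (S (S n)) <= (1 + / eps) * (2 * x ^ 2 / (INR n + 2)) * eh x (S n) + (1 + eps) * eh x n.
Proof.
  intros He. unfold eh. rewrite herm_rec. rewrite !fct_S, !S_INR.
  set (a := hermite (S n) x). set (b := hermite n x). set (N := INR n).
  assert (HN : 0 <= N) by apply pos_INR.
  assert (HF := fct_pos n). assert (HP : 0 < 2 ^ n) by (apply pow_lt; lra).
  set (F := fct n) in *. set (P := 2 ^ n) in *.
  set (D := 4 * P * (N + 1 + 1) * (N + 1) * F).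
  assert (HD : 0 < D) by (unfold D; repeat apply Rmult_lt_0_compat; lra).
  set (X := 2 * x * a). set (Y := 2 * (N + 1) * b).
  assert (E1 : (X - Y) ^ 2 / (2 ^ S (S n) * ((N + 1 + 1) * ((N + 1) * F)))
             = (X - Y) ^ 2 / D).
  { unfold X, Y, D, P. simpl pow. field. repeat split; try lra; apply pow_nonzero; lra. }
  assert (E2 : (1 + / eps) * (2 * x ^ 2 / (N + 2)) * (a ^ 2 / (2 ^ S n * ((N + 1) * F))) +
                (1 + eps) * (b ^ 2 / (P * F))
             = ((1 + / eps) * X ^ 2 + (1 + eps) * (4 * (N + 2) * (N + 1) * b ^ 2)) / D).
  { unfold X, D, P. simpl pow. field. repeat split; try lra; apply pow_nonzero; lra. }
  rewrite E1, E2.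
  unfold Rdiv. apply Rmult_le_compat_r. left; apply Rinv_0_lt_compat; lra.
  set (ie := / eps).
  assert (Hie : ie * eps = 1) by (unfold ie; field; lra).
  assert (Hie0 : 0 < ie) by (unfold ie; apply Rinv_0_lt_compat; lra).
  assert (Hsq : 0 <= ie * (X + eps * Y) ^ 2) by (apply Rmult_le_pos; [lra|apply pow2_ge_0]).
  assert (Hyg : (X - Y) ^ 2 <= (1 + ie) * X ^ 2 + (1 + eps) * Y ^ 2).
  { assert (Ee : (1 + ie) * X ^ 2 + (1 + eps) * Y ^ 2 - (X - Y) ^ 2 = ie * (X + eps * Y) ^ 2).
    { replace (ie * (X + eps * Y) ^ 2) with (ie * X ^ 2 + 2 * (ie * eps) * X * Y + (ie * eps) * eps * Y ^ 2) by ring.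
      rewrite Hie. ring. }
    lra. }
  assert (HY : Y ^ 2 <= 4 * (N + 2) * (N + 1) * b ^ 2).
  { unfold Y. assert (0 <= b ^ 2) by apply pow2_ge_0.
    replace ((2 * (N + 1) * b) ^ 2) with (4 * (N + 1) * (N + 1) * b ^ 2) by ring.
    apply Rmult_le_compat_r; [lra|]. nra. }
  assert (0 < 1 + eps) by lra. nra.
Qed.

Lemma sum_term_le (f : nat -> R) (N k : nat) : (forall i, 0 <= f i) -> (k <= N)%nat -> f k <= sum_f_R0 f N.
Proof.
  intros Hf Hk. induction N as [|N IH].
  - assert (k = 0%nat) by lia. subst. simpl. lra.
  - simpl. destruct (Nat.eq_dec k (S N)) as [->|Hne].
    + assert (0 <= sum_f_R0 f N).
      { clear IH Hk. induction N; simpl. apply Hf. specialize (Hf (S N)). lra. }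
      lra.
    + assert (k <= N)%nat by lia. specialize (IH H). specialize (Hf (S N)). lra.
Qed.

Lemma eh_bound (x lam : R) : 1 < lam -> exists K, forall n, eh x n <= K * lam ^ n.
Proof.
  intros Hl.
  set (eps := (lam - 1) / 2).
  assert (He : 0 < eps) by (unfold eps; lra).
  destruct (INR_unbounded ((1 + / eps) * (2 * x ^ 2) / eps)) as [N HN].
  set (K := 1 + sum_f_R0 (fun k => eh x k / lam ^ k) (S N)).
  assert (Hlp : forall k, 0 < lam ^ k) by (intros; apply pow_lt; lra).
  assert (Hbase : forall k, (k <= S N)%nat -> eh x k <= K * lam ^ k).
  { intros k Hk.
    assert (H1 := sum_term_le (fun k => eh x k / lam ^ k) (S N) k).
    assert (H2 : eh x k / lam ^ k <= sum_f_R0 (fun k => eh x k / lam ^ k) (S N)).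
    { apply H1; auto. intros i. apply Rmult_le_pos. apply eh_nonneg. left; apply Rinv_0_lt_compat, Hlp. }
    assert (H3 : eh x k / lam ^ k < K) by (unfold K; lra).
    specialize (Hlp k).
    apply (Rmult_lt_compat_r (lam ^ k)) in H3; [|lra].
    unfold Rdiv in H3. rewrite Rmult_assoc, Rinv_l in H3 by lra. lra. }
  exists K.
  assert (Hpair : forall n, eh x n <= K * lam ^ n /\ eh x (S n) <= K * lam ^ (S n)).
  { induction n as [|n [IH1 IH2]].
    - split; apply Hbase; lia.
    - split; auto.
      destruct (Compare_dec.le_lt_dec (S (S n)) (S N)) as [Hle|Hlt].
      + apply Hbase; auto.
      + eapply Rle_trans. apply (eh_step x eps n He).
        assert (HNn : INR N <= INR n + 2).
        { replace (INR n + 2) with (INR (S (S n))) by (rewrite !S_INR; ring). apply le_INR. lia. }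
        assert (Hcoef : (1 + / eps) * (2 * x ^ 2 / (INR n + 2)) <= eps).
        { assert (Hpos : 0 < INR n + 2) by (assert (0 <= INR n) by apply pos_INR; lra).
          assert (Hc0 : 0 <= (1 + / eps) * (2 * x ^ 2)).
          { apply Rmult_le_pos. assert (0 < / eps) by (apply Rinv_0_lt_compat; lra). lra.
            assert (0 <= x ^ 2) by apply pow2_ge_0. lra. }
          replace ((1 + / eps) * (2 * x ^ 2 / (INR n + 2))) with ((1 + / eps) * (2 * x ^ 2) / (INR n + 2)) by (field; lra).
          apply (Rmult_le_reg_r (INR n + 2)); auto. unfold Rdiv. rewrite Rmult_assoc, Rinv_l by lra.
          rewrite Rmult_1_r.
          assert (Hq : (1 + / eps) * (2 * x ^ 2) < eps * INR N).
          { apply (Rmult_lt_reg_r (/ eps)). apply Rinv_0_lt_compat; lra.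
            replace (eps * INR N * / eps) with (INR N) by (field; lra). unfold Rdiv in HN. lra. }
          assert (eps * INR N <= eps * (INR n + 2)) by (apply Rmult_le_compat_l; lra). lra. }
        assert (H0 := eh_nonneg x (S n)).
        assert (Ht : (1 + / eps) * (2 * x ^ 2 / (INR n + 2)) * eh x (S n) <= eps * (K * lam ^ S n)).
        { apply Rmult_le_compat; auto. 
          apply Rmult_le_pos. assert (0 < / eps) by (apply Rinv_0_lt_compat; lra). lra.
          apply Rmult_le_pos. assert (0 <= x ^ 2) by apply pow2_ge_0. lra. left; apply Rinv_0_lt_compat. 
          assert (0 <= INR n) by apply pos_INR. lra. }
        assert (Ht2 : (1 + eps) * eh x n <= (1 + eps) * (K * lam ^ n)) by (apply Rmult_le_compat_l; lra).
        assert (HK : 0 <= K).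
        { assert (Hb0 := Hbase 0%nat (Nat.le_0_l _)). assert (H00 := eh_nonneg x 0). simpl in Hb0. lra. }
        assert (Hlam : eps * lam + (1 + eps) <= lam * lam) by (unfold eps; nra).
        simpl pow. simpl pow in Ht.
        assert (0 <= K * lam ^ n) by (apply Rmult_le_pos; [lra| left; apply Hlp]).
        nra. }
  intros n. apply Hpair.
Qed.

Lemma sq_abs (A : R) : A ^ 2 = Rabs A * Rabs A.
Proof. rewrite <- Rabs_mult, Rabs_pos_eq; [ring| nra]. Qed.

Lemma bco_abs x y n : Rabs (bco x y n) <= (eh x n + eh y n) / 2.
Proof.
  unfold bco, eh.
  assert (HP : 0 < 2 ^ n * fct n) by (apply Rmult_lt_0_compat; [apply pow_lt; lra| apply fct_pos]).
  set (A := hermite n x). set (B := hermite n y). set (P := 2 ^ n * fct n) in *.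
  unfold Rdiv. rewrite Rabs_mult, (Rabs_pos_eq (/ P)) by (left; apply Rinv_0_lt_compat; lra).
  rewrite Rabs_mult.
  assert (H : Rabs A * Rabs B <= (A ^ 2 + B ^ 2) / 2).
  { rewrite (sq_abs A), (sq_abs B). assert (0 <= (Rabs A - Rabs B) ^ 2) by apply pow2_ge_0. nra. }
  assert (0 < / P) by (apply Rinv_0_lt_compat; lra).
  replace ((A ^ 2 * / P + B ^ 2 * / P) * / 2) with ((A ^ 2 + B ^ 2) / 2 * / P) by (field; lra).
  apply Rmult_le_compat_r; lra.
Qed.

Lemma bco_disk x y r : 0 <= r < 1 -> CV_disk (bco x y) r.
Proof.
  intros Hr.
  set (lam := 2 / (1 + r)).
  assert (Hl : 1 < lam) by (unfold lam; apply (Rmult_lt_reg_r (1 + r)); [lra|]; unfold Rdiv; rewrite Rmult_assoc, Rinv_l by lra; lra).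
  destruct (eh_bound x lam Hl) as [Kx HKx].
  destruct (eh_bound y lam Hl) as [Ky HKy].
  set (q := lam * r).
  assert (Hq : 0 <= q < 1).
  { unfold q, lam. split. apply Rmult_le_pos; [|lra]. left; apply Rdiv_lt_0_compat; lra.
    apply (Rmult_lt_reg_r (1 + r)); [lra|]. unfold Rdiv. field_simplify; lra. }
  unfold CV_disk.
  apply (ex_series_le (K := R_AbsRing) (V := R_CompleteNormedModule) _ (fun n => (Kx + Ky) / 2 * q ^ n)).
  - intros n. change (norm (Rabs (bco x y n * r ^ n))) with (Rabs (Rabs (bco x y n * r ^ n))).
    rewrite Rabs_Rabsolu, Rabs_mult, (Rabs_pos_eq (r ^ n)) by (apply pow_le; lra).
    eapply Rle_trans. apply Rmult_le_compat_r. apply pow_le; lra. apply bco_abs.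
    unfold q. rewrite Rpow_mult_distr.
    assert (0 <= r ^ n) by (apply pow_le; lra).
    specialize (HKx n). specialize (HKy n).
    replace ((Kx + Ky) / 2 * (lam ^ n * r ^ n)) with ((Kx * lam ^ n + Ky * lam ^ n) / 2 * r ^ n) by (field).
    apply Rmult_le_compat_r; lra.
  - apply (ex_series_scal_l (V := R_NormedModule)). apply ex_series_geom. rewrite Rabs_pos_eq; lra.
Qed.

Lemma bco_radius x y w : Rabs w < 1 -> Rbar_lt (Rabs w) (CV_radius (bco x y)).
Proof.
  intros Hw.
  set (r := (Rabs w + 1) / 2).
  assert (Hr : 0 <= r < 1) by (unfold r; assert (0 <= Rabs w) by apply Rabs_pos; lra).
  assert (H := bco_disk x y r Hr).
  assert (Hle : Rbar_le r (CV_radius (bco x y))).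
  { unfold CV_radius. apply (proj1 (Lub_Rbar_correct (CV_disk (bco x y)))). exact H. }
  destruct (CV_radius (bco x y)) as [c| |]; simpl in *; auto.
  unfold r in Hle. lra.
Qed.

Lemma bco_rec' (x y : R) (m : nat) :
  INR (S (S (S (S (S m))))) * bco x y (S (S (S (S (S m))))) =
  2 * x * y * bco x y (S (S (S (S m)))) + (2 * INR (S m) + 5 - 2 * (x ^ 2 + y ^ 2)) * bco x y (S (S (S m)))
  + 2 * x * y * bco x y (S (S m)) - INR (S (S m)) * bco x y (S m).
Proof.
  assert (H := bco_rec x y (S m)).
  replace (S m + 4)%nat with (S (S (S (S (S m))))) in H by lia.
  replace (S m + 3)%nat with (S (S (S (S m)))) in H by lia.
  replace (S m + 2)%nat with (S (S (S m))) in H by lia.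
  replace (S m + 1)%nat with (S (S m)) in H by lia.
  exact H.
Qed.

Definition Pcoef (x y w : R) := 2 * x * y + (1 - 2 * (x ^ 2 + y ^ 2)) * w + 2 * x * y * w ^ 2 - w ^ 3.

Lemma ode_coef (x y : R) (n : nat) :
  let b := bco x y in let D := PS_derive b in
  D n - 2 * PS_incr_n D 2 n + PS_incr_n D 4 n
  - (2 * x * y * b n + (1 - 2 * (x ^ 2 + y ^ 2)) * PS_incr_n b 1 n + 2 * x * y * PS_incr_n b 2 n
     - PS_incr_n b 3 n) = 0.
Proof.
  intros b D.
  destruct n as [|[|[|[|m]]]].
  1-4: unfold D, b, PS_derive; simpl PS_incr_n; unfold PS_incr_1, zero; simpl; unfold bco, fct; simpl; field.
  change (PS_incr_n D 2 (S (S (S (S m))))) with (D (S (S m))).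
  change (PS_incr_n D 4 (S (S (S (S m))))) with (D m).
  change (PS_incr_n b 1 (S (S (S (S m))))) with (b (S (S (S m)))).
  change (PS_incr_n b 2 (S (S (S (S m))))) with (b (S (S m))).
  change (PS_incr_n b 3 (S (S (S (S m))))) with (b (S m)).
  unfold D, PS_derive, b. rewrite bco_rec'. rewrite !S_INR. ring.
Qed.

Lemma ode (x y w : R) : Rabs w < 1 ->
  (1 - w ^ 2) ^ 2 * PSeries (PS_derive (bco x y)) w = Pcoef x y w * PSeries (bco x y) w.
Proof.
  intros Hw.
  set (b := bco x y). set (D := PS_derive b).
  assert (HD := PSeries_correct D w (ex_pseries_derive b w (bco_radius x y w Hw))).
  assert (Hb := PSeries_correct b w (CV_radius_inside b w (bco_radius x y w Hw))).
  set (fD := PSeries D w) in *. set (fb := PSeries b w) in *.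
  assert (Hc : forall c : R, mult w c = mult c w) by (intros; apply Rmult_comm).
  assert (H1 := is_pseries_scal 2 _ _ _ (Hc 2) (is_pseries_incr_n D 2 w fD HD)).
  assert (H2 := is_pseries_incr_n D 4 w fD HD).
  assert (HL := is_pseries_plus _ _ _ _ _ (is_pseries_minus _ _ _ _ _ HD H1) H2).
  assert (H3 := is_pseries_scal (2 * x * y) _ _ _ (Hc _) Hb).
  assert (H4 := is_pseries_scal (1 - 2 * (x ^ 2 + y ^ 2)) _ _ _ (Hc _) (is_pseries_incr_n b 1 w fb Hb)).
  assert (H5 := is_pseries_scal (2 * x * y) _ _ _ (Hc _) (is_pseries_incr_n b 2 w fb Hb)).
  assert (H6 := is_pseries_incr_n b 3 w fb Hb).
  assert (HR := is_pseries_minus _ _ _ _ _ (is_pseries_plus _ _ _ _ _ (is_pseries_plus _ _ _ _ _ H3 H4) H5) H6).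
  assert (HT := is_pseries_minus _ _ _ _ _ HL HR).
  match type of HT with is_pseries _ _ ?L => assert (HZ : is_pseries (fun _ : nat => 0) w L) end.
  { eapply is_pseries_ext; [|exact HT]. intros n.
    unfold PS_minus, PS_plus, PS_scal, PS_opp. unfold plus, opp, scal; simpl. unfold mult; simpl.
    assert (E := ode_coef x y n). simpl in E. fold b D in E. lra. }
  apply is_pseries_unique in HZ. rewrite PSeries_const_0 in HZ.
  unfold plus, opp, scal in HZ; simpl in HZ. unfold mult in HZ; simpl in HZ. unfold one in HZ; simpl in HZ. unfold Pcoef. simpl pow. lra.
Qed.


Lemma is_derive_eqR (f : R -> R) (x l l' : R) : is_derive f x l -> l = l' -> is_derive f x l'.
Proof. intros H E; subst; exact H. Qed.

Definition Eexp (x y w : R) := (2 * x * y * w - (x ^ 2 + y ^ 2) * w ^ 2) / (1 - w ^ 2).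
Definition Qf (x y w : R) := sqrt (1 - w ^ 2) * exp (- Eexp x y w).

Lemma sqrt_deriv (w : R) : Rabs w < 1 ->
  is_derive (fun w => sqrt (1 - w ^ 2)) w (- w * sqrt (1 - w ^ 2) / (1 - w ^ 2)).
Proof.
  intros Hw.
  assert (Hw2 : 0 < 1 - w ^ 2).
  { assert (w ^ 2 = Rabs w * Rabs w) by (rewrite <- Rabs_mult, Rabs_pos_eq; [ring|nra]).
    assert (0 <= Rabs w) by apply Rabs_pos. nra. }
  eapply is_derive_eqR. auto_derive. fix_pow. lra. reflexivity.
  fix_pow. replace (1 + - w ^ 2) with (1 - w ^ 2) by ring.
  assert (Hr := sqrt_lt_R0 _ Hw2). assert (Hr2 := sqrt_sqrt _ (Rlt_le _ _ Hw2)).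
  set (r := sqrt (1 - w ^ 2)) in *.
  rewrite <- Hr2. field. lra.
Qed.

Lemma abs_lt1 (w : R) : Rabs w < 1 -> 0 < 1 - w ^ 2.
Proof.
  intros Hw. assert (w ^ 2 = Rabs w * Rabs w) by (rewrite <- Rabs_mult, Rabs_pos_eq; [ring|nra]).
  assert (0 <= Rabs w) by apply Rabs_pos. nra.
Qed.

Lemma Q_deriv (x y w : R) : Rabs w < 1 ->
  is_derive (Qf x y) w (- Pcoef x y w / (1 - w ^ 2) ^ 2 * Qf x y w).
Proof.
  intros Hw. assert (Hw2 := abs_lt1 w Hw).
  set (s := x ^ 2 + y ^ 2).
  set (dE := ((2 * x * y - 2 * s * w) * (1 - w ^ 2) + 2 * w * (2 * x * y * w - s * w ^ 2)) / (1 - w ^ 2) ^ 2).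
  assert (HE : is_derive (fun w => - Eexp x y w) w (- dE)).
  { unfold Eexp. eapply is_derive_eqR. auto_derive. fix_pow. lra. reflexivity.
    unfold dE, s. fix_pow. field. lra. }
  assert (HX := is_derive_comp exp (fun w => - Eexp x y w) w _ _ (is_derive_exp _) HE).
  assert (HS := sqrt_deriv w Hw).
  assert (HP := is_derive_mult (K:=R_AbsRing) _ _ _ _ _ HS HX (fun n m => Rmult_comm n m)).
  unfold Qf. eapply is_derive_eqR. exact HP.
  unfold plus, mult, scal; simpl. unfold mult; simpl.
  unfold Pcoef, dE, s. field. lra.
Qed.

Lemma G_deriv (x y t : R) : Rabs t < 1 ->
  is_derive (fun t => PSeries (bco x y) t * Qf x y t) t 0.
Proof.
  intros Ht. assert (Ht2 := abs_lt1 t Ht).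
  assert (HF := is_derive_PSeries (bco x y) t (bco_radius x y t Ht)).
  assert (HQ := Q_deriv x y t Ht).
  assert (HP := is_derive_mult (K:=R_AbsRing) _ _ _ _ _ HF HQ (fun n m => Rmult_comm n m)).
  eapply is_derive_eqR. exact HP.
  unfold plus, mult; simpl.
  assert (Ho := ode x y t Ht).
  set (fD := PSeries (PS_derive (bco x y)) t) in *.
  set (fb := PSeries (bco x y) t) in *.
  set (q := Qf x y t).
  assert (E : fD = Pcoef x y t * fb / (1 - t ^ 2) ^ 2).
  { rewrite <- Ho. field. lra. }
  rewrite E. field. lra.
Qed.

Lemma bco_0 x y : bco x y 0 = 1.
Proof. unfold bco, fct. simpl. field. Qed.

Lemma mehler (x y w : R) : 0 <= w < 1 ->
  PSeries (bco x y) w = exp (Eexp x y w) / sqrt (1 - w ^ 2).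
Proof.
  intros Hw.
  destruct (MVT_gen (fun t => PSeries (bco x y) t * Qf x y t) 0 w (fun _ => 0)) as [c [Hc E]].
  - intros t Ht. apply G_deriv. unfold Rmin, Rmax in Ht. destruct (Rle_dec 0 w); [|lra].
    rewrite Rabs_pos_eq; lra.
  - intros t Ht. apply (proj2 (continuity_pt_filterlim _ _)).
    exact (@ex_derive_continuous R_AbsRing R_NormedModule _ t
             (ex_intro _ 0 (G_deriv x y t ltac:(unfold Rmin, Rmax in Ht; destruct (Rle_dec 0 w); [|lra]; rewrite Rabs_pos_eq; lra)))).
  - cbv beta in E. rewrite PSeries_0, bco_0 in E.
    unfold Qf in E. replace (Eexp x y 0) with 0 in E by (unfold Eexp; field).
    replace (1 - 0 ^ 2) with 1 in E by ring. rewrite sqrt_1, Ropp_0, exp_0 in E.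
    assert (Hw2 : 0 < 1 - w ^ 2) by nra.
    assert (Hr := sqrt_lt_R0 _ Hw2).
    assert (HG : PSeries (bco x y) w * (sqrt (1 - w ^ 2) * exp (- Eexp x y w)) = 1) by lra.
    rewrite exp_Ropp in HG.
    assert (0 < exp (Eexp x y w)) by apply exp_pos.
    apply (Rmult_eq_reg_r (sqrt (1 - w ^ 2) * / exp (Eexp x y w))).
    rewrite HG. field. split; lra.
    apply Rmult_integral_contrapositive. split. lra. apply Rinv_neq_0_compat. lra.
Qed.

Lemma RtoC_mult' (a b : R) : Cmult (RtoC a) (RtoC b) = RtoC (a * b).
Proof. unfold Cmult, RtoC; simpl. f_equal; ring. Qed.

Lemma ZSeries_R_scal (K : R) (g : Z -> R) : ZSeries_R (fun s => K * g s) = K * ZSeries_R g.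
Proof. unfold ZSeries_R. rewrite !Series_scal_l. ring. Qed.

Lemma Series_zero : Series (fun _ : nat => 0) = 0.
Proof.
  replace (fun _ : nat => 0) with (fun n : nat => 0 * (fun _ : nat => 1) n).
  rewrite Series_scal_l. ring.
  apply functional_extensionality; intros; ring.
Qed.

Lemma ZSeries_R_0 : ZSeries_R (fun _ => 0) = 0.
Proof. unfold ZSeries_R. rewrite Series_zero. ring. Qed.

Lemma ZSeries_RtoC (a : Z -> Complex.C) (K : R) (g : Z -> R) :
  (forall s, a s = RtoC (K * g s)) -> ZSeries a = RtoC (K * ZSeries_R g).
Proof.
  intros H. unfold ZSeries.
  replace (fun s => Re (a s)) with (fun s => K * g s).
  replace (fun s => Im (a s)) with (fun _ : Z => 0).
  rewrite ZSeries_R_scal, ZSeries_R_0. reflexivity.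
  all: apply functional_extensionality; intros s; rewrite H; reflexivity.
Qed.

Lemma normalize_RtoC (psi : wf) (K : R) (G : R -> R) : 0 < K ->
  (forall x, psi x = RtoC (K * G x)) ->
  forall x, normalize psi x = RtoC (G x * / sqrt (RInt_R (fun x => G x ^ 2))).
Proof.
  intros HK H x. unfold normalize, norm2.
  replace (fun x => Cabs2 (psi x)) with (fun x => K ^ 2 * G x ^ 2).
  2:{ apply functional_extensionality; intros y. rewrite H. unfold Cabs2, RtoC; simpl. ring. }
  rewrite RInt_R_scal by (apply pow_nonzero; lra).
  rewrite H, RtoC_mult'. f_equal.
  rewrite sqrt_mult_alt by (apply pow2_ge_0).
  rewrite sqrt_pow2 by lra.
  rewrite Rinv_mult. set (s := / sqrt _). replace (/ K * s * (K * G x)) with ((/ K * K) * (G x * s)) by ring. rewrite Rinv_l by lra. ring.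
Qed.

Definition Fexp (b x y : R) := - (cosh b / sinh b) / 2 * (x ^ 2 + y ^ 2) + x * y / sinh b.
Definition Fq (b x y : R) := exp (Fexp b x y).

Lemma exp_INR_mul (a : R) (n : nat) : exp (INR n * a) = exp a ^ n.
Proof.
  induction n as [|n IH]. simpl. rewrite Rmult_0_l, exp_0. reflexivity.
  rewrite S_INR. replace ((INR n + 1) * a) with (INR n * a + a) by ring.
  rewrite exp_plus, IH. simpl. ring.
Qed.

Lemma sinh_pos b : 0 < b -> 0 < sinh b.
Proof.
  intros Hb. unfold sinh. assert (exp (- b) < exp b) by (apply exp_increasing; lra). lra.
Qed.

Lemma cosh_pos b : 0 < cosh b.
Proof. unfold cosh. assert (0 < exp b) by apply exp_pos. assert (0 < exp (- b)) by apply exp_pos. lra. Qed.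

Lemma expN_formula (b y x : R) : 0 < b ->
  expN b y x = RtoC (exp (- b / 2) / (sqrt PI * sqrt (1 - exp (- b) ^ 2)) * Fq b x y).
Proof.
  intros Hb. unfold expN. f_equal.
  set (w := exp (- b)).
  assert (Hw : 0 <= w < 1).
  { unfold w. split. left; apply exp_pos. rewrite <- exp_0. apply exp_increasing. lra. }
  assert (HPI : 0 < sqrt PI) by (apply sqrt_lt_R0, PI_RGT_0).
  set (C := exp (- b / 2) * exp (- (x ^ 2 + y ^ 2) / 2) / sqrt PI).
  assert (HS : Series (fun n => exp (- b * (INR n + / 2)) * hermite_fn n y * hermite_fn n x)
               = C * PSeries (bco x y) w).
  { unfold PSeries. rewrite <- Series_scal_l. apply Series_ext. intros n.
    unfold hermite_fn, bco, C, w.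
    set (A := 2 ^ n * INR (Factorial.fact n) * sqrt PI).
    assert (HA : 0 < A).
    { unfold A. apply Rmult_lt_0_compat; [|lra]. apply Rmult_lt_0_compat. apply pow_lt; lra.
      apply lt_0_INR, Factorial.lt_O_fact. }
    assert (HsA : sqrt A * sqrt A = A) by (apply sqrt_sqrt; lra).
    assert (HsA0 : 0 < sqrt A) by (apply sqrt_lt_R0; lra).
    replace (- b * (INR n + / 2)) with (INR n * (- b) + (- b / 2)) by field.
    rewrite exp_plus, exp_INR_mul.
    replace (- (x ^ 2 + y ^ 2) / 2) with (- x ^ 2 / 2 + - y ^ 2 / 2) by field.
    rewrite exp_plus. unfold fct.
    replace (2 ^ n * INR (Factorial.fact n)) with (A / sqrt PI) by (unfold A; field; lra).
    apply (Rmult_eq_reg_r (sqrt A * sqrt A)); [|nra].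
    field_simplify; try lra. rewrite pow2_sqrt by lra. field. lra. }
  rewrite HS, mehler by exact Hw.
  unfold C, Fq. 
  assert (Hw2 : 0 < 1 - w ^ 2) by nra.
  assert (Hs := sqrt_lt_R0 _ Hw2).
  replace (exp (- b / 2) * exp (- (x ^ 2 + y ^ 2) / 2) / sqrt PI * (exp (Eexp x y w) / sqrt (1 - w ^ 2)))
    with (exp (- b / 2) / (sqrt PI * sqrt (1 - w ^ 2)) * (exp (- (x ^ 2 + y ^ 2) / 2) * exp (Eexp x y w)))
    by (field; lra).
  rewrite <- exp_plus. f_equal. f_equal.
  unfold Eexp, Fexp, w, cosh, sinh. rewrite exp_Ropp.
  assert (HE : 1 < exp b) by (rewrite <- exp_0; apply exp_increasing; lra).
  field. split; nra.
Qed.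

Lemma Vavg_formula (g dl J0 y x : R) : 0 < g -> 0 < dl ->
  (forall k, is_RInt_gen (gc (/ (2 * g ^ 2)) k) mI pI (J0 * exp (- k ^ 2 / (4 * / (2 * g ^ 2))))) ->
  Vavg (gauss2 g dl) y x =
  RtoC (/ (2 * PI * g * dl) * J0 * exp (- (x - y) ^ 2 / (2 * dl ^ 2) - g ^ 2 * (x + y) ^ 2 / 8)).
Proof.
  intros Hg Hd HJ.
  set (a := / (2 * g ^ 2)).
  assert (Ha : 0 < a) by (unfold a; apply Rinv_0_lt_compat; nra).
  set (k := (x + y) / 2).
  set (C := / (2 * PI * g * dl) * exp (- (x - y) ^ 2 / (2 * dl ^ 2))).
  assert (ERe : RInt_R (fun r1 => Re (Cmult (RtoC (gauss2 g dl r1 (x - y)))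
                (Cmult (cis (- r1 * (x - y) / 2)) (cis (r1 * x)))))
             = C * (J0 * exp (- k ^ 2 / (4 * a)))).
  { replace (fun r1 => Re (Cmult (RtoC (gauss2 g dl r1 (x - y)))
                (Cmult (cis (- r1 * (x - y) / 2)) (cis (r1 * x)))))
      with (fun r => scal C (gc a k r)).
    + unfold RInt_R. apply is_RInt_gen_unique. apply (is_RInt_gen_scal (V := R_NormedModule)). apply HJ.
    + apply functional_extensionality. intros r.
      change (C * gc a k r = Re (Cmult (RtoC (gauss2 g dl r (x - y))) (Cmult (cis (- r * (x - y) / 2)) (cis (r * x))))).
      unfold gc, gauss2, cis, Cmult, RtoC, Re, Im, C, a, k; cbn [fst snd].
      replace (cos (- r * (x - y) / 2) * cos (r * x) - sin (- r * (x - y) / 2) * sin (r * x))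
        with (cos (- r * (x - y) / 2 + r * x)) by (rewrite cos_plus; ring).
      replace (- r * (x - y) / 2 + r * x) with ((x + y) / 2 * r) by field.
      replace (- r ^ 2 / (2 * g ^ 2) - (x - y) ^ 2 / (2 * dl ^ 2))
        with (- (x - y) ^ 2 / (2 * dl ^ 2) + - / (2 * g ^ 2) * r ^ 2) by (field; lra).
      rewrite exp_plus. ring. }
  assert (EIm : RInt_R (fun r1 => Im (Cmult (RtoC (gauss2 g dl r1 (x - y)))
                (Cmult (cis (- r1 * (x - y) / 2)) (cis (r1 * x))))) = 0).
  { replace (fun r1 => Im (Cmult (RtoC (gauss2 g dl r1 (x - y)))
                (Cmult (cis (- r1 * (x - y) / 2)) (cis (r1 * x)))))
      with (fun r => scal C (gs a k r)).
    + unfold RInt_R. replace 0 with (scal C 0) by (unfold scal; simpl; unfold mult; simpl; ring).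
      apply is_RInt_gen_unique. apply (is_RInt_gen_scal (V := R_NormedModule)). apply gauss_sin; exact Ha.
    + apply functional_extensionality. intros r.
      change (C * gs a k r = Im (Cmult (RtoC (gauss2 g dl r (x - y))) (Cmult (cis (- r * (x - y) / 2)) (cis (r * x))))).
      unfold gs, gauss2, cis, Cmult, RtoC, Re, Im, C, a, k; cbn [fst snd].
      replace (cos (- r * (x - y) / 2) * sin (r * x) + sin (- r * (x - y) / 2) * cos (r * x))
        with (sin (- r * (x - y) / 2 + r * x)) by (rewrite sin_plus; ring).
      replace (- r * (x - y) / 2 + r * x) with ((x + y) / 2 * r) by field.
      replace (- r ^ 2 / (2 * g ^ 2) - (x - y) ^ 2 / (2 * dl ^ 2))
        with (- (x - y) ^ 2 / (2 * dl ^ 2) + - / (2 * g ^ 2) * r ^ 2) by (field; lra).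
      rewrite exp_plus. ring. }
  unfold Vavg, CInt_R. rewrite ERe, EIm. unfold RtoC. f_equal.
  unfold C.
  replace (- (x - y) ^ 2 / (2 * dl ^ 2) - g ^ 2 * (x + y) ^ 2 / 8)
    with (- (x - y) ^ 2 / (2 * dl ^ 2) + - k ^ 2 / (4 * a)) by (unfold k, a; field; lra).
  rewrite exp_plus. ring.
Qed.

Definition FF (d j : nat) (b x : R) : R := ZSeries_R (fun s => Fq b x (qpt d j s)).

Lemma exp_half (b : R) : exp b = exp (b / 2) ^ 2.
Proof. replace b with (b / 2 + b / 2) at 1 by field. rewrite exp_plus. ring. Qed.

Lemma exponent2 (b g dl x y : R) : 0 < b -> g ^ 2 = 2 * tanh (b / 2) -> dl ^ 2 = 2 * tanh (b / 2) ->
  - (x - y) ^ 2 / (2 * dl ^ 2) - g ^ 2 * (x + y) ^ 2 / 8 = Fexp b x y.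
Proof.
  intros Hb Hg Hd. rewrite Hg, Hd.
  unfold Fexp, tanh, sinh, cosh. rewrite !exp_Ropp. rewrite (exp_half b).
  assert (Hu : 1 < exp (b / 2)) by (rewrite <- exp_0; apply exp_increasing; lra).
  set (u := exp (b / 2)) in *.
  assert (Huu : 1 < u * u) by nra. assert (1 < (u * u) ^ 2) by nra. field. repeat split; nra.
Qed.

Lemma exponent1 (b kappa Delta z q : R) : 0 < b -> 0 < Delta ->
  kappa ^ 2 = tanh b -> Delta ^ 2 = sinh b * cosh b ->
  - / 2 * kappa ^ 2 * q ^ 2 + - (exp (- ln Delta) * (z - q)) ^ 2 / 2 = Fexp b (z / cosh b) q.
Proof.
  intros Hb HD Hk HDel.
  rewrite exp_Ropp, exp_ln by exact HD.
  replace (- (/ Delta * (z - q)) ^ 2 / 2) with (- (z - q) ^ 2 / (2 * Delta ^ 2)) by (field; lra).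
  rewrite Hk, HDel.
  unfold Fexp, tanh, sinh, cosh. rewrite !exp_Ropp.
  assert (HE : 1 < exp b) by (rewrite <- exp_0; apply exp_increasing; lra).
  set (E := exp b) in *.
  field. repeat split; nra.
Qed.

Lemma alpha_pos (d : nat) : (1 <= d)%nat -> 0 < sqrt (alpha d * INR d).
Proof.
  intros Hd. apply sqrt_lt_R0. unfold alpha.
  assert (HdR : 1 <= INR d) by (apply (le_INR 1); exact Hd).
  apply Rmult_lt_0_compat; [|lra].
  apply sqrt_lt_R0. apply Rdiv_lt_0_compat; [|lra]. assert (H := PI_RGT_0). lra.
Qed.

Lemma exp_ln_half (c : R) : 0 < c -> exp (ln c / 2) = sqrt c.
Proof.
  intros Hc. rewrite <- (sqrt_pow2 (exp (ln c / 2))) by (left; apply exp_pos).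
  f_equal. rewrite <- exp_half. apply exp_ln; exact Hc.
Qed.

Theorem theorem1 (d j : nat) (beta kappa Delta gamma delta : R) :
  (1 <= d)%nat -> (j < d)%nat -> 0 < beta ->
  0 < kappa -> 0 < Delta -> 0 < gamma -> 0 < delta ->
  kappa ^ 2 = gamma ^ 2 / lam gamma delta ->
  gamma ^ 2 / lam gamma delta = tanh beta ->
  Delta ^ 2 = delta ^ 2 / lam gamma delta
              * / (1 - gamma ^ 2 * delta ^ 2 / (2 * lam gamma delta)) ^ 2 ->
  delta ^ 2 / lam gamma delta
    * / (1 - gamma ^ 2 * delta ^ 2 / (2 * lam gamma delta)) ^ 2
    = sinh beta * cosh beta ->
  gamma ^ 2 = delta ^ 2 ->
  delta ^ 2 = 2 * tanh (beta / 2) ->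
  forall x : R,
    Sop (ln (sqrt (1 + kappa ^ 2 * Delta ^ 2))) (gkp1 d j kappa Delta) x
      = gkp2 d j gamma delta x
    /\ gkp2 d j gamma delta x = gkp3 d j beta x.
Proof.
  intros Hd Hj Hb Hk0 HD0 Hg0 Hd0 Hk1 Hk2 HD1 HD2 Hgd Hdt x.
  assert (HK : kappa ^ 2 = tanh beta) by (rewrite Hk1; exact Hk2).
  assert (HD : Delta ^ 2 = sinh beta * cosh beta) by (rewrite HD1; exact HD2).
  assert (Hgt : gamma ^ 2 = 2 * tanh (beta / 2)) by (rewrite Hgd; exact Hdt).
  assert (Hsh := sinh_pos beta Hb). assert (Hch := cosh_pos beta).
  assert (Hc : sqrt (1 + kappa ^ 2 * Delta ^ 2) = cosh beta).
  { rewrite HK, HD.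
    replace (1 + tanh beta * (sinh beta * cosh beta)) with (cosh beta ^ 2).
    apply sqrt_pow2; lra.
    unfold tanh, sinh, cosh. rewrite !exp_Ropp.
    assert (HE : 0 < exp beta) by apply exp_pos.
    field. split; nra. }
  set (NF := RInt_R (fun x => FF d j beta x ^ 2)).
  assert (Ha := alpha_pos d Hd).
  assert (H3 : gkp3 d j beta x = RtoC (FF d j beta x * / sqrt NF)).
  { unfold gkp3. apply (normalize_RtoC _ (sqrt (alpha d * INR d) *
        (exp (- beta / 2) / (sqrt PI * sqrt (1 - exp (- beta) ^ 2))))).
    - apply Rmult_lt_0_compat; auto. apply Rdiv_lt_0_compat. apply exp_pos.
      apply Rmult_lt_0_compat. apply sqrt_lt_R0, PI_RGT_0.
      apply sqrt_lt_R0. assert (exp (- beta) < 1) by (rewrite <- exp_0; apply exp_increasing; lra).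
      assert (0 < exp (- beta)) by apply exp_pos. nra.
    - intros y. unfold apply_ideal.
      rewrite (ZSeries_RtoC _ (exp (- beta / 2) / (sqrt PI * sqrt (1 - exp (- beta) ^ 2)))
                 (fun s => Fq beta y (qpt d j s))).
      + rewrite RtoC_mult'. unfold FF. f_equal. ring.
      + intros s. apply expN_formula; exact Hb. }
  destruct (gauss_main (/ (2 * gamma ^ 2))) as [J0 [HJ0 HJ]].
  { apply Rinv_0_lt_compat. nra. }
  assert (H2 : gkp2 d j gamma delta x = RtoC (FF d j beta x * / sqrt NF)).
  { unfold gkp2. apply (normalize_RtoC _ (sqrt (alpha d * INR d) * (/ (2 * PI * gamma * delta) * J0))).
    - assert (H := PI_RGT_0).
      assert (0 < 2 * PI * gamma * delta) by (apply Rmult_lt_0_compat; [apply Rmult_lt_0_compat; [lra|lra]|lra]).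
      apply Rmult_lt_0_compat. exact Ha. apply Rmult_lt_0_compat. apply Rinv_0_lt_compat. lra. exact HJ0.
    - intros y. unfold apply_ideal.
      rewrite (ZSeries_RtoC _ (/ (2 * PI * gamma * delta) * J0) (fun s => Fq beta y (qpt d j s))).
      + rewrite RtoC_mult'. unfold FF. f_equal. ring.
      + intros s. rewrite (Vavg_formula gamma delta J0 (qpt d j s) y Hg0 Hd0 HJ).
        unfold Fq. rewrite (exponent2 beta gamma delta y (qpt d j s) Hb Hgt Hdt). reflexivity. }
  assert (H1 : forall z, gkp1 d j kappa Delta z =
     RtoC (FF d j beta (z / cosh beta) * / sqrt (RInt_R (fun z => FF d j beta (z / cosh beta) ^ 2)))).
  { unfold gkp1. apply (normalize_RtoC _ (exp (- ln Delta / 2) * / Rpower PI (1 / 4))).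
    - apply Rmult_lt_0_compat. apply exp_pos. apply Rinv_0_lt_compat. unfold Rpower. apply exp_pos.
    - intros z. unfold gkp1_un.
      rewrite (ZSeries_RtoC _ (exp (- ln Delta / 2) * / Rpower PI (1 / 4)) (fun s => Fq beta (z / cosh beta) (qpt d j s))).
      + unfold FF. reflexivity.
      + intros s. unfold Xop, Sop, vac. rewrite !RtoC_mult'. f_equal.
        unfold Fq. rewrite <- (exponent1 beta kappa Delta z (qpt d j s) Hb HD0 HK HD).
        rewrite exp_plus. ring. }
  assert (HN1 : RInt_R (fun z => FF d j beta (z / cosh beta) ^ 2) = cosh beta * NF).
  { unfold NF. apply (RInt_R_dilate (fun u => FF d j beta u ^ 2)). exact Hch. }
  split.
  - rewrite H2. unfold Sop. rewrite Hc. rewrite exp_ln by exact Hch.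
    rewrite H1, HN1. rewrite RtoC_mult'. f_equal.
    replace (cosh beta * x / cosh beta) with x by (field; lra).
    rewrite exp_ln_half by exact Hch.
    rewrite sqrt_mult_alt by lra. rewrite Rinv_mult.
    assert (Hs : 0 < sqrt (cosh beta)) by (apply sqrt_lt_R0; lra).
    set (a := / sqrt NF).
    replace (sqrt (cosh beta) * (FF d j beta x * (/ sqrt (cosh beta) * a)))
      with ((sqrt (cosh beta) * / sqrt (cosh beta)) * (FF d j beta x * a)) by ring.
    rewrite Rinv_r by lra. ring.
  - rewrite H2, H3. reflexivity.
Qed.
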